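(* Let $\bar A=I_{N_sN_t}$. Assume there is $L_f>0$ with $\|f(w,t)-f(y,t)\|_2\le L_f\|w-y\|_2$ for all $w,y\in\mathbb{R}^{N_s}$, $t\in[0,T]$, and $\Delta t<\sigma_{\min}(A_{LM})/(L_f\sigma_{\max}(B_{LM}))$. Let $x\in\mathbb{R}^{N_sN_t}$ satisfy $\bar r(x)=0$ and $\tilde x\in\arg\min_{w\in\mathcal{S}}\|\bar r(w)\|_2$. Define $$\Lambda:=\frac{\sigma_{\max}(A_{LM})-\sigma_{\min}(A_{LM})+2\Delta t L_f\sigma_{\max}(B_{LM})}{\sigma_{\min}(A_{LM})-\Delta t L_f\sigma_{\max}(B_{LM})}.$$ Then $\|x-\tilde x\|_2\le(1+\Lambda)\min_{w\in\mathcal{S}}\|x-w\|_2$ and $\max_{1\le n\le N_t}\|x^n-\tilde x^n\|_2\le\sqrt{N_t}(1+\Lambda)\min_{w\in\mathcal{S}}\max_{1\le n\le N_t}\|x^n-w^n\|_2$.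
   Context: Let $f:\mathbb{R}^{N_s}\times[0,T]\to\mathbb{R}^{N_s}$ be the velocity of the ODE $\dot x=f(x,t)$, $x(0)=x^0\in\mathbb{R}^{N_s}$. Use a uniform time grid $t^n=n\Delta t$, $n=0,\dots,N_t$, $\Delta t=T/N_t$. A linear multistep scheme is given by integers $k(n)\le n$ and coefficients $\alpha_j^n,\beta_j^n\in\mathbb{R}$, $j=0,\dots,k(n)$, $n=1,\dots,N_t$, with $\alpha_0^n\neq0$. For $w=(w^1,\dots,w^{N_t})\in\mathbb{R}^{N_sN_t}$ (blocks $w^n\in\mathbb{R}^{N_s}$) set $w^0:=x^0$ and define the residual at step $n$ by $r^n(w)=\sum_{j=0}^{k(n)}\alpha_j^n w^{n-j}-\Delta t\sum_{j=0}^{k(n)}\beta_j^n f(w^{n-j},t^{n-j})$, and the space–time residual $\bar r(w)=(r^1(w),\dots,r^{N_t}(w))\in\mathbb{R}^{N_sN_t}$. Let $A_{LM},B_{LM}\in\mathbb{R}^{N_sN_t\times N_sN_t}$ be the block lower-triangular matrices (blocks of size $N_s\times N_s$) whose $(n,n-j)$ block is $\alpha_j^n I_{N_s}$, resp. $\beta_j^n I_{N_s}$, for $0\le j\le k(n)$ with $n-j\ge1$, and zero otherwise. $\sigma_{\max}(M)$, $\sigma_{\min}(M)$ denote the largest and smallest singular values of $M$; $\|\cdot\|_2$ is the Euclidean norm on $\mathbb{R}^{N_sN_t}$. The space–time trial subspace is the affine subspace $\mathcal{S}=\{(x^0,\dots,x^0)+\sum_{i=1}^{n_{st}}c_i\pi_i: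 c\in\mathbb{R}^{n_{st}}\}\subseteq\mathbb{R}^{N_sN_t}$ for given vectors $\pi_1,\dots,\pi_{n_{st}}\in\mathbb{R}^{N_sN_t}$. *)

(* Defs.v *)
From HB Require Import structures.
From mathcomp Require Import all_boot all_order all_algebra.
Set Implicit Arguments. Unset Strict Implicit. Unset Printing Implicit Defensive.
Import Order.TTheory GRing.Theory Num.Theory.
Local Open Scope ring_scope.

Section Defs.
Variable R : rcfType.

Definition vget {N : nat} (w : 'cV[R]_N) (p : nat) : R :=
  match (insub p : option 'I_N) with Some o => w o 0 | None => 0 end.

Definition norm2 {N : nat} (v : 'cV[R]_N) : R := Num.sqrt (\sum_(i < N) v i 0 ^+ 2).

(* Space-time vectors live in R^(Nt*Ns); the block w^n (1 <= n <= Nt)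
   consists of entries (n-1)*Ns + i, i < Ns.  By convention w^0 := x0. *)
Definition block (Ns Nt : nat) (x0 : 'cV[R]_Ns) (w : 'cV[R]_(Nt * Ns)) (n : nat)
  : 'cV[R]_Ns :=
  if n is m.+1 then \col_(i < Ns) vget w (m * Ns + i)%N else x0.

Definition lm_resid (Ns Nt : nat) (dt : R) (f : 'cV[R]_Ns -> R -> 'cV[R]_Ns)
  (k : nat -> nat) (alpha beta : nat -> nat -> R) (x0 : 'cV[R]_Ns)
  (w : 'cV[R]_(Nt * Ns)) (n : nat) : 'cV[R]_Ns :=
  \sum_(j < (k n).+1)
     (alpha n j *: block x0 w (n - j)%N
      - (dt * beta n j) *: f (block x0 w (n - j)%N) ((n - j)%N%:R * dt)).

Definition st_resid (Ns Nt : nat) (dt : R) (f : 'cV[R]_Ns -> R -> 'cV[R]_Ns)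
  (k : nat -> nat) (alpha beta : nat -> nat -> R) (x0 : 'cV[R]_Ns)
  (w : 'cV[R]_(Nt * Ns)) : 'cV[R]_(Nt * Ns) :=
  \col_(p < Nt * Ns)
     vget (lm_resid dt f k alpha beta x0 w (p %/ Ns)%N.+1) (p %% Ns)%N.

(* Block lower-triangular matrix whose (n, n-j) block (1-based, n-j >= 1,
   0 <= j <= k(n)) is coef n j * I_Ns; used for A_LM (coef = alpha) and
   B_LM (coef = beta). *)
Definition lm_matrix (Ns Nt : nat) (k : nat -> nat) (coef : nat -> nat -> R)
  : 'M[R]_(Nt * Ns) :=
  \matrix_(p < Nt * Ns, q < Nt * Ns)
    let b := (p %/ Ns)%N in let c := (q %/ Ns)%N in
    if ((p %% Ns)%N == (q %% Ns)%N) && (c <= b)%N && (b - c <= k b.+1)%N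
    then coef b.+1 (b - c)%N else 0.

Definition singular_value {N : nat} (M : 'M[R]_N) (s : R) : Prop :=
  0 <= s /\ eigenvalue (M^T *m M) (s ^+ 2).

Definition is_sigma_max {N : nat} (M : 'M[R]_N) (s : R) : Prop :=
  singular_value M s /\ forall s', singular_value M s' -> s' <= s.

Definition is_sigma_min {N : nat} (M : 'M[R]_N) (s : R) : Prop :=
  singular_value M s /\ forall s', singular_value M s' -> s <= s'.

(* The affine trial subspace S = (x0,...,x0) + span(pi_1..pi_nst). *)
Definition x0_rep (Ns Nt : nat) (x0 : 'cV[R]_Ns) : 'cV[R]_(Nt * Ns) :=
  \col_(p < Nt * Ns) vget x0 (p %% Ns)%N.

Definition in_trial (Ns Nt nst : nat) (x0 : 'cV[R]_Ns)
  (pi : 'I_nst -> 'cV[R]_(Nt * Ns)) (w : 'cV[R]_(Nt * Ns)) : Prop :=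
  exists c : 'I_nst -> R, w = x0_rep Nt x0 + \sum_(i < nst) c i *: pi i.

End Defs.

(* Main.v *)
Require Import Defs.
From HB Require Import structures.
From mathcomp Require Import all_boot all_order all_algebra.
From mathcomp Require Import spectral sesquilinear ring lra.
From mathcomp.real_closed Require Import complex.
Import Order.TTheory GRing.Theory Num.Theory Num.Def.
Local Open Scope ring_scope.
Set Implicit Arguments. Unset Strict Implicit.

Section S.
Variable R : rcfType.
Local Notation C := (R[i]).
Local Notation toC := (real_complex R).
Local Notation ct M := (map_mx conjC (trmx M)).

Lemma conj_toC (x : R) : conjC (toC x) = toC x.
Proof. apply/CrealP/complex_realP; by exists x. Qed.

Lemma ctM m n p (A : 'M[C]_(m, n)) (B : 'M[C]_(n, p)) : ct (A *m B) = ct B *m ct A.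
Proof. by rewrite trmx_mul map_mxM. Qed.

Lemma ctK m n (A : 'M[C]_(m, n)) : ct (ct A) = A.
Proof. by apply/matrixP=> i j; rewrite !mxE conjCK. Qed.

Lemma spec_bound n (S : 'M[R]_n) (a b : R) :
  S^T = S -> (forall x, eigenvalue S x -> a <= x <= b) ->
  forall v : 'rV[R]_n,
    a * (v *m v^T) 0 0 <= (v *m S *m v^T) 0 0 <= b * (v *m v^T) 0 0.
Proof.
move=> Ssym hab v.
set S' := map_mx toC S.
have herm : S' \is hermsymmx.
  apply/is_hermitianmxP; rewrite expr0 scale1r.
  apply/matrixP=> i j; rewrite !mxE conj_toC.
  by rewrite -[in LHS]Ssym mxE.
have /orthomx_spectralP Sdec := hermitian_normalmx herm.
set P := spectralmx S' in Sdec; set d := spectral_diag S' in Sdec.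
have Pu : P \is unitarymx := spectral_unitarymx S'.
have PPt : ct P *m P = 1%:M.
  by rewrite -invmx_unitary // mulVmx // unitarymx_unit.
have PtP : P *m ct P = 1%:M by apply/unitarymxP.
have dreal := hermitian_spectral_diag_real herm.
have dbound : forall i, toC a <= d 0 i <= toC b.
  move=> i.
  have /complex_realP [x dx] : d 0 i \is Num.real by apply: (mxOverP dreal).
  have : eigenvalue S' (d 0 i).
    apply/eigenvalueP; exists (row i P); last first.
      apply/negP => /eqP r0.
      have : row i (P *m ct P) = 0 by rewrite row_mul r0 mul0mx.
      rewrite PtP => /rowP /(_ i); rewrite !mxE eqxx /=.
      by move/eqP; rewrite oner_eq0.
    rewrite {1}Sdec invmx_unitary // -row_mul !mulmxA PtP mul1mx.
    by rewrite row_mul row_diag_mx -scalemxAl -rowE.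
  rewrite dx eigenvalue_map => /hab /andP[h1 h2].
  by rewrite !lecR h1 h2.
set w := map_mx toC v.
have ctw : ct w = map_mx toC v^T.
  by apply/matrixP=> i j; rewrite !mxE conj_toC.
have E1 : toC ((v *m S *m v^T) 0 0) = (w *m S' *m ct w) 0 0.
  by rewrite ctw -!map_mxM [RHS]mxE.
have E2 : toC ((v *m v^T) 0 0) = (w *m ct w) 0 0.
  by rewrite ctw -!map_mxM [RHS]mxE.
set u := w *m ct P.
have Eu : ct u = P *m ct w by rewrite ctM ctK.
have F1 : w *m S' *m ct w = u *m diag_mx d *m ct u.
  by rewrite Eu {1}Sdec invmx_unitary // !mulmxA.
have F2 : w *m ct w = u *m ct u.
  by rewrite Eu mulmxA -[w *m ct P *m P]mulmxA PPt mulmx1.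
have G1 : (u *m diag_mx d *m ct u) 0 0 = \sum_i d 0 i * (u 0 i * conjC (u 0 i)).
  rewrite mul_mx_diag mxE; apply: eq_bigr => i _; rewrite !mxE; ring.
have G2 : (u *m ct u) 0 0 = \sum_i (u 0 i * conjC (u 0 i)).
  rewrite mxE; apply: eq_bigr => i _; rewrite !mxE //.
rewrite -!lecR !rmorphM /= E1 E2 F1 F2 G1 G2 !mulr_sumr.
apply/andP; split; apply: ler_sum => i _; apply: ler_wpM2r;
  try exact: mul_conjC_ge0; by case/andP: (dbound i).
Qed.
End S.

Section Norms.
Variable R : rcfType.

Definition ns {N} (v : 'cV[R]_N) := \sum_(i < N) v i 0 ^+ 2.

Lemma norm2E N (v : 'cV[R]_N) : norm2 v = Num.sqrt (ns v).
Proof. by []. Qed.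

Lemma ns_ge0 N (v : 'cV[R]_N) : 0 <= ns v.
Proof. by apply: sumr_ge0 => i _; apply: sqr_ge0. Qed.

Lemma norm2_ge0 N (v : 'cV[R]_N) : 0 <= norm2 v.
Proof. exact: sqrtr_ge0. Qed.

Lemma norm2_sqr N (v : 'cV[R]_N) : norm2 v ^+ 2 = ns v.
Proof. by rewrite norm2E sqr_sqrtr // ns_ge0. Qed.

Lemma cs (I : finType) (a b : I -> R) :
  (\sum_i a i * b i) ^+ 2 <= (\sum_i a i ^+ 2) * (\sum_i b i ^+ 2).
Proof.
set A := \sum_i a i ^+ 2; set B := \sum_i b i ^+ 2; set S := \sum_i a i * b i.
have B0 : 0 <= B by apply: sumr_ge0 => i _; apply: sqr_ge0.
have [Bz|Bp] := eqVneq B 0.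
  have bz : forall i, b i = 0.
    move=> i; apply/eqP; rewrite -sqrf_eq0; apply/eqP.
    by apply: (psumr_eq0P _ Bz) => // j _; apply: sqr_ge0.
  have -> : S = 0 by rewrite /S big1 // => i _; rewrite bz mulr0.
  by rewrite Bz expr0n /= mulr0.
have Bpos : 0 < B by rewrite lt_neqAle eq_sym Bp B0.
have H : 0 <= \sum_i (B * a i - S * b i) ^+ 2.
  by apply: sumr_ge0 => i _; apply: sqr_ge0.
have E : \sum_i (B * a i - S * b i) ^+ 2 = B ^+ 2 * A + (- (2 * B * S)) * S + S ^+ 2 * B.
  rewrite (eq_bigr (fun i => B ^+ 2 * a i ^+ 2 + (- (2 * B * S)) * (a i * b i)
                         + S ^+ 2 * b i ^+ 2)); last by move=> i _; ring.
  by rewrite !big_split /= -!mulr_sumr.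
rewrite E in H.
have : 0 <= B * (B * A - S ^+ 2) by rewrite (_ : _ * _ = B ^+ 2 * A + - (2 * B * S) * S + S ^+ 2 * B) //; ring.
by rewrite pmulr_rge0 // subr_ge0 mulrC.
Qed.

Lemma ns_add N (u v : 'cV[R]_N) :
  ns (u + v) = ns u + 2 * \sum_i u i 0 * v i 0 + ns v.
Proof.
rewrite /ns mulr_sumr -!big_split /=; apply: eq_bigr => i _; rewrite !mxE; ring.
Qed.

Lemma norm2_triangle N (u v : 'cV[R]_N) : norm2 (u + v) <= norm2 u + norm2 v.
Proof.
have h0 : 0 <= norm2 u + norm2 v by rewrite addr_ge0 // norm2_ge0.
rewrite -[X in _ <= X]ger0_norm // -sqrtr_sqr norm2E ler_sqrt ?sqr_ge0 //.
rewrite sqrrD !norm2_sqr ns_add.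
set S := \sum_i _.
suff h : S <= norm2 u * norm2 v by rewrite mulr2n; lra.
apply: (le_trans (ler_norm S)).
rewrite -sqrtr_sqr !norm2E -sqrtrM ?ns_ge0 // ler_sqrt; last by rewrite mulr_ge0 ?ns_ge0.
exact: cs.
Qed.

Lemma norm2_scale N c (v : 'cV[R]_N) : norm2 (c *: v) = `|c| * norm2 v.
Proof.
rewrite !norm2E -sqrtr_sqr -sqrtrM ?sqr_ge0 //; congr Num.sqrt.
rewrite /ns mulr_sumr; apply: eq_bigr => i _; rewrite !mxE; ring.
Qed.

Lemma norm2_opp N (v : 'cV[R]_N) : norm2 (- v) = norm2 v.
Proof. by rewrite -scaleN1r norm2_scale normrN1 mul1r. Qed.

Lemma norm2_subC N (u v : 'cV[R]_N) : norm2 (u - v) = norm2 (v - u).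
Proof. by rewrite -norm2_opp opprB. Qed.

Lemma norm2_sub_ge N (u v : 'cV[R]_N) : norm2 u - norm2 v <= norm2 (u - v).
Proof.
have := norm2_triangle (u - v) v; rewrite subrK; lra.
Qed.

Lemma norm2_sub_le N (u v : 'cV[R]_N) : norm2 (u - v) <= norm2 u + norm2 v.
Proof. by have := norm2_triangle u (- v); rewrite norm2_opp. Qed.

End Norms.

Section SV.
Variable R : rcfType.

Lemma rowsq N (v : 'rV[R]_N) : (v *m v^T) 0 0 = \sum_i v 0 i ^+ 2.
Proof. by rewrite mxE; apply: eq_bigr => i _; rewrite mxE expr2. Qed.

Lemma eig_sv N (M : 'M[R]_N) x : eigenvalue (M^T *m M) x ->
  0 <= x /\ singular_value M (Num.sqrt x).
Proof.
move=> ex.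
have x0 : 0 <= x.
  move/eigenvalueP: ex => [v vS vn0].
  have E : (v *m (M^T *m M) *m v^T) 0 0 = x * (v *m v^T) 0 0.
    by rewrite vS -scalemxAl mxE.
  have E2 : (v *m (M^T *m M) *m v^T) 0 0 = ((v *m M^T) *m (v *m M^T)^T) 0 0.
    by rewrite trmx_mul trmxK !mulmxA.
  have p0 : 0 < (v *m v^T) 0 0.
    rewrite rowsq lt_neqAle sumr_ge0 ?andbT; last by move=> i _; apply: sqr_ge0.
    apply/negP => /eqP /esym h; apply/negP: vn0; rewrite negbK.
    apply/eqP/rowP => i; rewrite mxE; apply/eqP; rewrite -sqrf_eq0; apply/eqP.
    by apply: (psumr_eq0P _ h) => // j _; apply: sqr_ge0.
  have : 0 <= x * (v *m v^T) 0 0.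
    by rewrite -E E2 rowsq sumr_ge0 // => i _; apply: sqr_ge0.
  by rewrite pmulr_lge0.
split => //; split; first exact: sqrtr_ge0.
by rewrite sqr_sqrtr.
Qed.

Lemma ns_quad N (M : 'M[R]_N) (u : 'cV[R]_N) :
  ns (M *m u) = ((u^T) *m (M^T *m M) *m (u^T)^T) 0 0.
Proof.
rewrite trmxK !mulmxA -trmx_mul -mulmxA.
rewrite mxE /ns; apply: eq_bigr => i _; by rewrite !mxE expr2.
Qed.

Lemma ns_quad1 N (u : 'cV[R]_N) : ns u = ((u^T) *m (u^T)^T) 0 0.
Proof. by rewrite rowsq /ns; apply: eq_bigr => i _; rewrite mxE. Qed.

Lemma sv_upper N (M : 'M[R]_N) s : is_sigma_max M s ->
  forall u, norm2 (M *m u) <= s * norm2 u.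
Proof.
move=> [[s0 _] smax] u.
have sym : (M^T *m M)^T = M^T *m M by rewrite trmx_mul trmxK.
have h := @spec_bound R N (M^T *m M) 0 (s ^+ 2) sym.
have hab : forall x, eigenvalue (M^T *m M) x -> 0 <= x <= s ^+ 2.
  move=> x /eig_sv [x0 /smax sx]; rewrite x0 /=.
  by rewrite -(sqr_sqrtr x0) lerXn2r // ?nnegrE ?sqrtr_ge0.
have /andP[_ H] := h hab (u^T).
rewrite !norm2E -(ger0_norm s0) -sqrtr_sqr -sqrtrM ?sqr_ge0 // ler_sqrt;
  last by rewrite mulr_ge0 ?sqr_ge0 ?ns_ge0.
by rewrite ns_quad ns_quad1.
Qed.

Lemma sv_lower N (M : 'M[R]_N) s s' : is_sigma_min M s -> is_sigma_max M s' ->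
  forall u, s * norm2 u <= norm2 (M *m u).
Proof.
move=> [[s0 _] smin] [[s'0 _] smax] u.
have sym : (M^T *m M)^T = M^T *m M by rewrite trmx_mul trmxK.
have h := @spec_bound R N (M^T *m M) (s ^+ 2) (s' ^+ 2) sym.
have hab : forall x, eigenvalue (M^T *m M) x -> s ^+ 2 <= x <= s' ^+ 2.
  move=> x /eig_sv [x0 sv]; move: (smin _ sv) (smax _ sv) => h1 h2.
  by rewrite -(sqr_sqrtr x0) !lerXn2r // ?nnegrE ?sqrtr_ge0 ?h1 ?h2.
have /andP[H _] := h hab (u^T).
rewrite !norm2E -(ger0_norm s0) -sqrtr_sqr -sqrtrM ?sqr_ge0 // ler_sqrt;
  last by apply: ns_ge0.
by rewrite ns_quad ns_quad1.
Qed.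
End SV.

Section Idx.
Variable R : rcfType.

Lemma vgetE N (v : 'cV[R]_N) p (h : (p < N)%N) : vget v p = v (Ordinal h) 0.
Proof. by rewrite /vget insubT. Qed.

Lemma vget_ord N (v : 'cV[R]_N) (i : 'I_N) : vget v i = v i 0.
Proof. by rewrite (vgetE v (ltn_ord i)); congr (v _ 0); apply: val_inj. Qed.

Lemma vget_out N (v : 'cV[R]_N) p : (N <= p)%N -> vget v p = 0.
Proof. by move=> h; rewrite /vget insubF // ltnNge h. Qed.

Lemma vget_gen N (P : R -> R -> R) (u v w : 'cV[R]_N) :
  P 0 0 = 0 -> (forall i, w i 0 = P (u i 0) (v i 0)) ->
  forall p, vget w p = P (vget u p) (vget v p).
Proof.
move=> P0 Hw p; case: (ltnP p N) => hp.
  by rewrite !(vgetE _ hp) Hw.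
by rewrite !vget_out.
Qed.

Lemma vgetD N (u v : 'cV[R]_N) p : vget (u + v) p = vget u p + vget v p.
Proof. by apply: (vget_gen (P := +%R)); [rewrite addr0 | move=> i; rewrite mxE]. Qed.

Lemma vgetB N (u v : 'cV[R]_N) p : vget (u - v) p = vget u p - vget v p.
Proof. by apply: (vget_gen (P := fun a b => a - b)); [rewrite subr0 | move=> i; rewrite !mxE]. Qed.

Lemma vgetZ N c (u : 'cV[R]_N) p : vget (c *: u) p = c * vget u p.
Proof. by apply: (vget_gen (P := fun a b => c * a) (v := u)); [rewrite mulr0 | move=> i; rewrite mxE]. Qed.

Lemma vget0 N p : vget (0 : 'cV[R]_N) p = 0.
Proof. by case: (ltnP p N) => hp; rewrite ?(vgetE _ hp) ?mxE ?vget_out. Qed.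

Lemma vget_sum N m (V : 'I_m -> 'cV[R]_N) p :
  vget (\sum_(j < m) V j) p = \sum_(j < m) vget (V j) p.
Proof.
elim/big_rec2: _ => [|j a b _ <-]; first exact: vget0.
by rewrite vgetD.
Qed.

Lemma vec_eq N (u v : 'cV[R]_N) : (forall p, (p < N)%N -> vget u p = vget v p) -> u = v.
Proof. by move=> h; apply/colP => i; rewrite -!vget_ord h. Qed.

Lemma ns_nat N (v : 'cV[R]_N) : ns v = \sum_(0 <= p < N) vget v p ^+ 2.
Proof. by rewrite big_mkord /ns; apply: eq_bigr => i _; rewrite vget_ord. Qed.

Lemma sum_blocks (Nt Ns : nat) (g : nat -> R) :
  \sum_(0 <= p < Nt * Ns) g p = \sum_(0 <= n < Nt) \sum_(0 <= i < Ns) g (n * Ns + i)%N.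
Proof.
elim: Nt => [|Nt IH]; first by rewrite mul0n !big_geq.
rewrite mulSnr (@big_cat_nat _ _ _ (Nt * Ns)) ?leq_addr //= IH big_nat_recr //=.
congr (_ + _).
rewrite -{1}[(Nt * Ns)%N]add0n big_addn addKn; apply: eq_bigr => i _.
by rewrite addnC.
Qed.

Lemma divmod_blk Ns c i : (i < Ns)%N -> ((c * Ns + i) %/ Ns = c)%N /\ ((c * Ns + i) %% Ns = i)%N.
Proof.
move=> hi; have Ns0 : (0 < Ns)%N by apply: leq_ltn_trans hi.
by rewrite divnMDl // divn_small // addn0 modnMDl modn_small.
Qed.

Lemma blk_lt Nt Ns c i : (c < Nt)%N -> (i < Ns)%N -> (c * Ns + i < Nt * Ns)%N.
Proof.
move=> hc hi; apply: (@leq_trans (c.+1 * Ns)); first by rewrite mulSnr ltn_add2l.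
by rewrite leq_mul2r hc orbT.
Qed.

Lemma block_get Ns Nt x0 (w : 'cV[R]_(Nt * Ns)) m i : (i < Ns)%N ->
  vget (block x0 w m.+1) i = vget w (m * Ns + i).
Proof. by move=> hi; rewrite (vgetE _ hi) mxE. Qed.

Lemma blockB Ns Nt x0 (w y : 'cV[R]_(Nt * Ns)) m :
  block x0 (w - y) m.+1 = block x0 w m.+1 - block x0 y m.+1.
Proof. by apply/colP => i; rewrite !mxE vgetB. Qed.

Lemma ns_blocks Ns Nt x0 (v : 'cV[R]_(Nt * Ns)) :
  ns v = \sum_(0 <= n < Nt) ns (block x0 v n.+1).
Proof.
rewrite ns_nat sum_blocks; apply: eq_big_nat => n _.
by rewrite ns_nat; apply: eq_big_nat => i /andP[_ hi]; rewrite block_get.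
Qed.

Lemma sum_pick Ns i (P : bool) (X : R) (Y : nat -> R) : (i < Ns)%N ->
  \sum_(0 <= j < Ns) (if (i == j) && P then X else 0) * Y j = if P then X * Y i else 0.
Proof.
move=> hi; case: P.
  rewrite big_mkord (bigD1 (Ordinal hi)) //= eqxx big1 ?addr0 //.
  move=> j hj; case: eqP => [e|]; last by rewrite mul0r.
  by move: hj; rewrite -val_eqE /= e eqxx.
by rewrite big1 // => j _; rewrite andbF mul0r.
Qed.

Lemma reindex_lm (Nt b K : nat) (F G : nat -> R) : (b < Nt)%N -> (K <= b.+1)%N -> G 0%N = 0 ->
  \sum_(0 <= c < Nt) (if (c <= b)%N && (b - c <= K)%N then F (b - c)%N * G c.+1 else 0)
  = \sum_(j < K.+1) F j * G (b.+1 - j)%N.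
Proof.
move=> hb hK G0.
rewrite (@big_cat_nat _ _ _ b.+1) //= [X in _ + X]big_nat_cond [X in _ + X]big1; last first.
  by move=> c /andP[/andP[hc _] _]; rewrite leqNgt hc.
rewrite addr0 big_nat_rev /=.
rewrite -[RHS](big_mkord xpredT (fun j => F j * G (b.+1 - j)%N)) (big_nat_widen _ _ _ _ _ (hK : (K.+1 <= b.+2)%N)) //.
rewrite [RHS]big_mkcond [RHS]big_nat_recr //= subnn G0 mulr0 if_same addr0.
apply: eq_big_nat => j /andP[_ hj].
by rewrite add0n subSS subKn // leq_subr /= subSn // ltnS.
Qed.
End Idx.

Section Resid.
Variable R : rcfType.
Variables (Ns Nt : nat) (dt : R) (f : 'cV[R]_Ns -> R -> 'cV[R]_Ns)
  (k : nat -> nat) (alpha beta : nat -> nat -> R) (x0 : 'cV[R]_Ns).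
Hypothesis Ns0 : (0 < Ns)%N.
Hypothesis kn : forall n, (k n <= n)%N.

Lemma row_sum (coef : nat -> nat -> R) (u : 'cV[R]_(Nt * Ns)) p (H : nat -> R) :
  (p < Nt * Ns)%N -> H 0%N = 0 ->
  (forall c, (c < Nt)%N -> vget u (c * Ns + p %% Ns) = H c.+1) ->
  vget (lm_matrix Ns Nt k coef *m u) p =
  \sum_(j < (k (p %/ Ns).+1).+1) coef (p %/ Ns).+1 j * H ((p %/ Ns).+1 - j)%N.
Proof.
move=> hp H0 Hu.
set b := (p %/ Ns)%N; set i := (p %% Ns)%N.
have hi : (i < Ns)%N by rewrite ltn_pmod.
have hb : (b < Nt)%N by rewrite ltn_divLR // mulnC.
rewrite (vgetE _ hp) mxE.
pose G := fun q : nat => (if ((p %% Ns)%N == (q %% Ns)%N) && (q %/ Ns <= p %/ Ns)%N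
        && (p %/ Ns - q %/ Ns <= k (p %/ Ns).+1)%N
       then coef (p %/ Ns).+1 (p %/ Ns - q %/ Ns)%N else 0) * vget u q.
rewrite (eq_bigr (fun q : 'I_(Nt * Ns) => G q)); last first.
  by move=> q _; rewrite /G mxE vget_ord.
rewrite -(big_mkord xpredT G) sum_blocks.
rewrite (@eq_big_nat _ _ _ 0 Nt _ (fun c => if (c <= b)%N && (b - c <= k b.+1)%N
   then coef b.+1 (b - c)%N * H c.+1 else 0)); last first.
  move=> c /andP[_ hc].
  rewrite (@eq_big_nat _ _ _ 0 Ns _ (fun j => (if (i == j) && ((c <= b)%N && (b - c <= k b.+1)%N)
       then coef b.+1 (b - c)%N else 0) * vget u (c * Ns + j))); last first.
    move=> j /andP[_ hj]; rewrite /G; have [-> ->] := divmod_blk c hj.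
    by rewrite -/b -/i andbA.
  by rewrite sum_pick // Hu.
exact: (@reindex_lm R Nt b (k b.+1) (coef b.+1) H hb (kn _) H0).
Qed.

Definition Fc (w : 'cV[R]_(Nt * Ns)) : 'cV[R]_(Nt * Ns) :=
  \col_(p < Nt * Ns) vget (f (block x0 w (p %/ Ns).+1) ((p %/ Ns).+1%:R * dt)) (p %% Ns).

Lemma resid_diff (w y : 'cV[R]_(Nt * Ns)) :
  st_resid dt f k alpha beta x0 w - st_resid dt f k alpha beta x0 y =
  lm_matrix Ns Nt k alpha *m (w - y) - dt *: (lm_matrix Ns Nt k beta *m (Fc w - Fc y)).
Proof.
apply: vec_eq => p hp.
set b := (p %/ Ns)%N; set i := (p %% Ns)%N.
have hi : (i < Ns)%N by rewrite ltn_pmod.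
rewrite !vgetB vgetZ.
rewrite (@row_sum alpha (w - y) p (fun m => vget (block x0 w m) i - vget (block x0 y m) i)) //;
  first last.
- by move=> c hc; rewrite vgetB !block_get.
- by rewrite subrr.
rewrite (@row_sum beta (Fc w - Fc y) p (fun m => vget (f (block x0 w m) (m%:R * dt)) i
      - vget (f (block x0 y m) (m%:R * dt)) i)) //; first last.
- move=> c hc; rewrite vgetB !(vgetE _ (blk_lt hc hi)) !mxE /=.
  by have [-> ->] := divmod_blk c hi.
- by rewrite subrr.
rewrite !(vgetE _ hp) !mxE -/b -/i.
rewrite /lm_resid !vget_sum -sumrB mulr_sumr -sumrB; apply: eq_bigr => j _.
rewrite !vgetB !vgetZ; ring.
Qed.

End Resid.

Lemma Fc_lip (R : rcfType) (Ns Nt : nat) (T Lf : R) (f : 'cV[R]_Ns -> R -> 'cV[R]_Ns)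
  (x0 : 'cV[R]_Ns) :
  (0 < Nt)%N -> 0 < T -> 0 <= Lf ->
  (forall (w y : 'cV[R]_Ns) (t : R), 0 <= t <= T ->
      norm2 (f w t - f y t) <= Lf * norm2 (w - y)) ->
  forall w y : 'cV[R]_(Nt * Ns),
  norm2 (Fc (T / Nt%:R) f x0 w - Fc (T / Nt%:R) f x0 y) <= Lf * norm2 (w - y).
Proof.
move=> Nt0 T0 Lf0 Lip w y.
have Ntp : 0 < Nt%:R :> R by rewrite ltr0n.
rewrite !norm2E -(ger0_norm Lf0) -sqrtr_sqr -sqrtrM ?sqr_ge0 // ler_sqrt;
  last by rewrite mulr_ge0 ?sqr_ge0 ?ns_ge0.
rewrite (ns_blocks x0 (Fc _ _ _ w - _)) (ns_blocks x0 (w - y)) mulr_sumr.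
apply: ler_sum_nat => n /andP[_ hn].
set t := n.+1%:R * (T / Nt%:R).
have -> : block x0 (Fc (T / Nt%:R) f x0 w - Fc (T / Nt%:R) f x0 y) n.+1
          = f (block x0 w n.+1) t - f (block x0 y n.+1) t.
  apply/colP => i; rewrite !mxE.
  rewrite vgetB !(vgetE _ (blk_lt hn (ltn_ord i))) !mxE /=.
  by have [-> ->] := divmod_blk n (ltn_ord i); rewrite !vget_ord.
have ht : 0 <= t <= T.
  rewrite /t mulr_ge0 ?divr_ge0 ?ler0n ?(ltW T0) //= mulrA ler_pdivrMr //.
  by rewrite mulrC ler_wpM2l ?(ltW T0) // ler_nat.
rewrite blockB -!norm2_sqr -exprMn lerXn2r ?nnegrE ?norm2_ge0 ?mulr_ge0 //.
  exact: norm2_ge0.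
exact: Lip.
Qed.

Lemma bigmax_ge0 (R : rcfType) n (F : 'I_n -> R) : 0 <= \big[Num.max/0]_(i < n) F i.
Proof.
by elim/big_rec: _ => // j a _ ha; rewrite le_max ha orbT.
Qed.

Lemma le_bigmax_i (R : rcfType) n (F : 'I_n -> R) i : F i <= \big[Num.max/0]_(i < n) F i.
Proof.
by rewrite (bigD1 i) //= le_max lexx.
Qed.

Lemma bigmax_le_c (R : rcfType) n (F : 'I_n -> R) c : 0 <= c -> (forall i, F i <= c) ->
  \big[Num.max/0]_(i < n) F i <= c.
Proof.
move=> c0 h; elim/big_ind: _ => // a b ha hb.
by rewrite ge_max ha hb.
Qed.

Lemma norm2_block_le (R : rcfType) Ns Nt x0 (v : 'cV[R]_(Nt * Ns)) (n : 'I_Nt) :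
  norm2 (block x0 v n.+1) <= norm2 v.
Proof.
rewrite !norm2E ler_sqrt ?ns_ge0 // (ns_blocks x0 v) big_mkord (bigD1 n) //=.
by rewrite lerDl sumr_ge0 // => i _; apply: ns_ge0.
Qed.

Lemma norm2_le_blocks (R : rcfType) Ns Nt x0 (v : 'cV[R]_(Nt * Ns)) :
  norm2 v <= Num.sqrt (Nt%:R) * \big[Num.max/0]_(n < Nt) norm2 (block x0 v n.+1).
Proof.
set M := \big[Num.max/0]_(n < Nt) _.
have M0 : 0 <= M by apply: bigmax_ge0.
rewrite -(ger0_norm M0) -sqrtr_sqr -sqrtrM ?ler0n // norm2E ler_sqrt;
  last by rewrite mulr_ge0 ?ler0n ?sqr_ge0.
rewrite (ns_blocks x0 v) big_mkord.
apply: (@le_trans _ _ (\sum_(n < Nt) M ^+ 2)).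
  apply: ler_sum => n _; rewrite -norm2_sqr lerXn2r ?nnegrE ?norm2_ge0 //.
  exact: (le_bigmax_i (fun n : 'I_Nt => norm2 (block x0 v n.+1))).
by rewrite sumr_const card_ord mulr_natl.
Qed.

Theorem mainTheorem5 (R : rcfType) (Ns Nt nst : nat) (T : R)
  (f : 'cV[R]_Ns -> R -> 'cV[R]_Ns) (x0 : 'cV[R]_Ns)
  (k : nat -> nat) (alpha beta : nat -> nat -> R)
  (pi : 'I_nst -> 'cV[R]_(Nt * Ns))
  (Lf sAmax sAmin sBmax : R)
  (x xt : 'cV[R]_(Nt * Ns)) :
  (0 < Ns)%N -> (0 < Nt)%N -> 0 < T ->
  (forall n, (k n <= n)%N) ->
  (forall n, (1 <= n <= Nt)%N -> alpha n 0%N != 0) ->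
  let dt := T / Nt%:R in
  0 < Lf ->
  (forall (w y : 'cV[R]_Ns) (t : R), 0 <= t <= T ->
      norm2 (f w t - f y t) <= Lf * norm2 (w - y)) ->
  is_sigma_max (lm_matrix Ns Nt k alpha) sAmax ->
  is_sigma_min (lm_matrix Ns Nt k alpha) sAmin ->
  is_sigma_max (lm_matrix Ns Nt k beta) sBmax ->
  dt * Lf * sBmax < sAmin ->
  st_resid dt f k alpha beta x0 x = 0 ->
  in_trial x0 pi xt ->
  (forall w, in_trial x0 pi w ->
     norm2 (st_resid dt f k alpha beta x0 xt)
       <= norm2 (st_resid dt f k alpha beta x0 w)) ->
  let Lambda := (sAmax - sAmin + 2 * dt * Lf * sBmax)
                / (sAmin - dt * Lf * sBmax) in
  (forall w, in_trial x0 pi w ->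
     norm2 (x - xt) <= (1 + Lambda) * norm2 (x - w)) /\
  (forall w, in_trial x0 pi w ->
     \big[Num.max/0]_(n < Nt) norm2 (block x0 x n.+1 - block x0 xt n.+1)
       <= Num.sqrt (Nt%:R) * (1 + Lambda) *
          \big[Num.max/0]_(n < Nt) norm2 (block x0 x n.+1 - block x0 w n.+1)).
Proof.
move=> Ns0 Nt0 T0 kn _ dt Lf0 Lip hAmax hAmin hBmax hsmall rx _ xtmin Lambda.
set A := lm_matrix Ns Nt k alpha; set B := lm_matrix Ns Nt k beta.
pose r := fun w : 'cV[R]_(Nt * Ns) => st_resid dt f k alpha beta x0 w.
have dt0 : 0 < dt by rewrite divr_gt0 // ltr0n.
have sB0 : 0 <= sBmax by case: hBmax => [[]].
have sA0 : 0 <= sAmin by case: hAmin => [[]].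
have sAle : sAmin <= sAmax by case: hAmax => _ h; apply: h; case: hAmin.
set c := sAmin - dt * Lf * sBmax.
set C := sAmax + dt * Lf * sBmax.
have c0 : 0 < c by rewrite subr_gt0.
have dLB0 : 0 <= dt * Lf * sBmax by apply: mulr_ge0 => //; apply: mulr_ge0; exact: ltW.
have FL : forall w y, norm2 (Fc dt f x0 w - Fc dt f x0 y) <= Lf * norm2 (w - y) := Fc_lip x0 Nt0 T0 (ltW Lf0) Lip.
have hB : forall w y, norm2 (dt *: (B *m (Fc dt f x0 w - Fc dt f x0 y)))
                       <= dt * Lf * sBmax * norm2 (w - y).
  move=> w y; rewrite norm2_scale ger0_norm ?(ltW dt0) //.
  have h1 := sv_upper hBmax (Fc dt f x0 w - Fc dt f x0 y).
  have h2 := FL w y.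
  have h3 : sBmax * norm2 (Fc dt f x0 w - Fc dt f x0 y) <= sBmax * (Lf * norm2 (w - y)).
    by rewrite ler_wpM2l.
  have h4 := le_trans h1 h3.
  have h5 := ler_wpM2l (ltW dt0) h4.
  apply: (le_trans h5).
  by rewrite (_ : dt * (sBmax * (Lf * norm2 (w - y))) = dt * Lf * sBmax * norm2 (w - y)) //; ring.
have lower : forall w y, c * norm2 (w - y) <= norm2 (r w - r y).
  move=> w y; rewrite /r resid_diff //.
  have h1 := sv_lower hAmin hAmax (w - y).
  have h2 := norm2_sub_ge (A *m (w - y)) (dt *: (B *m (Fc dt f x0 w - Fc dt f x0 y))).
  have h3 := hB w y.
  rewrite /c mulrBl; lra.
have upper : forall w y, norm2 (r w - r y) <= C * norm2 (w - y).
  move=> w y; rewrite /r resid_diff //.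
  have h1 := sv_upper hAmax (w - y).
  have h2 := norm2_sub_le (A *m (w - y)) (dt *: (B *m (Fc dt f x0 w - Fc dt f x0 y))).
  have h3 := hB w y.
  rewrite /C mulrDl; lra.
have EL : 1 + Lambda = C / c.
  have cn0 := lt0r_neq0 c0.
  rewrite /Lambda /C; move: cn0; rewrite /c.
  clear -T0; move: dt => d hd; field; exact: hd.
have part1 : forall w, in_trial x0 pi w -> norm2 (x - xt) <= (1 + Lambda) * norm2 (x - w).
  move=> w hw; rewrite EL mulrAC ler_pdivlMr //.
  have h1 := lower xt x; have h2 := upper w x; have h3 := xtmin w hw.
  move: h1 h2; rewrite /r rx !subr0 => h1 h2.
  rewrite mulrC norm2_subC (norm2_subC x w).
  exact: le_trans h1 (le_trans h3 h2).
split => // w hw.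
have L0 : 0 <= 1 + Lambda.
  by rewrite EL divr_ge0 ?(ltW c0) // /C addr_ge0 // (le_trans sA0 sAle).
apply: (@le_trans _ _ (norm2 (x - xt))).
  apply: bigmax_le_c; first exact: norm2_ge0.
  by move=> n; rewrite -blockB; apply: norm2_block_le.
apply: (le_trans (part1 w hw)).
rewrite [Num.sqrt _ * _]mulrC -mulrA ler_wpM2l //.
under eq_bigr do rewrite -blockB.
exact: norm2_le_blocks.
Qed.
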